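(* Let $\omega=SSw$ be an attack cycle starting with two letters S, where $w=w_1\cdots w_\nu$ with $w_\nu=H$, and let $X_0=0$, $X_i=X_{i-1}+1$ if $w_i=S$ and $X_i=X_{i-1}-1$ if $w_i=H$. Define $$D(\omega)=\sum_{i}\,(X_i+3),$$ the sum being over all indices $1\le i\le\nu$ with $X_i<n_1-2$ and $X_i<X_{i-1}$. Then $$\mathbb{E}[D(\omega)\mid\omega=SS\ldots]=\frac{p}{(p-q)^2}\Bigl(2p-q-\bigl(p+n_1(p-q)\bigr)\Bigl(\frac qp\Bigr)^{n_1-1}\Bigr).$$
   Context: Honest hashrate $p$, attacker hashrate $q$, $p+q=1$, $0<q<p$; $n_1\ge2$ is an integer. The attack cycles starting with SS are the words $SSw'H$ with $w'$ a Dyck word over $\{S,H\}$ and $\mathbb{P}[SSw'H]=q^2p(pq)^{|w'|}$ ($|w'|$ half the length of $w'$); equivalently, conditional on starting with SS, $(X_i)$ is a random walk from $0$ with up-step probability $q$ and down-step probability $p$, stopped at its first visit to $-1$ (time $\nu$). (For an honest block at index $i$ of $w$, $X_i+2$ is its relative height, i.e. the height of the attacker's fork at its creation minus its own height, and $X_i+3$ is its distance to a nephew if it becomes an uncle.) *)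

(* Defs.v *)
From Stdlib Require Import Reals ZArith List Bool.
Import ListNotations.
Open Scope R_scope.

(* Letters: true = S (attacker block), false = H (honest block). *)
Definition letter := bool.
Definition S : letter := true.
Definition H : letter := false.

Fixpoint all_words (n : nat) : list (list letter) :=
  match n with
  | O => [nil]
  | Datatypes.S m => flat_map (fun w => [S :: w; H :: w]) (all_words m)
  end.

Fixpoint dyck_from (h : nat) (w : list letter) : bool :=
  match w with
  | nil => Nat.eqb h 0
  | b :: w' =>
      if b then dyck_from (Datatypes.S h) w'
      else match h with O => false | Datatypes.S h' => dyck_from h' w' end
  end.
Definition is_dyck (w : list letter) : bool := dyck_from 0 w.

Definition step (x : Z) (b : letter) : Z := if b then (x + 1)%Z else (x - 1)%Z.

Fixpoint D_from (n1 : nat) (x : Z) (w : list letter) : Z :=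
  match w with
  | nil => 0%Z
  | b :: w' =>
      let y := step x b in
      ((if (y <? Z.of_nat n1 - 2)%Z && (y <? x)%Z then (y + 3)%Z else 0%Z)
       + D_from n1 y w')%Z
  end.

(* D(omega) for omega = S S w, with X_0 = 0. *)
Definition D (n1 : nat) (w : list letter) : Z := D_from n1 0%Z w.

(* Conditional probability P[omega = S S w' H | omega starts with SS]
   = P[SSw'H] / q^2 = p (pq)^{|w'|}, |w'| the semilength of the Dyck word w'. *)
Definition cond_prob (p q : R) (k : nat) : R := p * (p * q) ^ k.

(* Contribution to E[D | SS] of the attack cycles SSw'H with w' a Dyck word
   of semilength k. *)
Definition E_term (n1 : nat) (p q : R) (k : nat) : R :=
  fold_right Rplus 0
    (map (fun w' => if is_dyck w'
                    then cond_prob p q k * IZR (D n1 (w' ++ [H]))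
                    else 0)
         (all_words (2 * k))).

(* Main.v *)
Require Import Defs.
From Stdlib Require Import Reals Lra Lia ZArith List Bool.
Import ListNotations.
Open Scope R_scope.

Definition sumL (F : list letter -> R) (l : list (list letter)) : R :=
  fold_right Rplus 0 (map F l).

Lemma sumL_aw F m :
  sumL F (all_words (Datatypes.S m)) =
  sumL (fun w => F (true :: w) + F (false :: w)) (all_words m).
Proof.
  change (all_words (Datatypes.S m)) with
    (flat_map (fun w => [true :: w; false :: w]) (all_words m)).
  induction (all_words m) as [|w l IH]; unfold sumL in *; simpl; [reflexivity|].
  rewrite IH. ring.
Qed.

Lemma sumL_lin1 (A B : list letter -> R) a l :
  (forall w, In w l -> A w = a * B w) -> sumL A l = a * sumL B l.
Proof.
  induction l as [|w l IH]; intros E; unfold sumL in *; simpl; [ring|].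
  rewrite E by (left; reflexivity). rewrite IH by (intros; apply E; right; auto). ring.
Qed.

Lemma sumL_lin2 (A B C : list letter -> R) a b l :
  (forall w, In w l -> A w = a * (B w + b * C w)) ->
  sumL A l = a * (sumL B l + b * sumL C l).
Proof.
  induction l as [|w l IH]; intros E; unfold sumL in *; simpl; [ring|].
  rewrite E by (left; reflexivity). rewrite IH by (intros; apply E; right; auto). ring.
Qed.

Lemma sumL_lin3 (A B C D0 : list letter -> R) a b c l :
  (forall w, In w l -> A w = a * B w + b * (C w + c * D0 w)) ->
  sumL A l = a * sumL B l + b * (sumL C l + c * sumL D0 l).
Proof.
  induction l as [|w l IH]; intros E; unfold sumL in *; simpl; [ring|].
  rewrite E by (left; reflexivity). rewrite IH by (intros; apply E; right; auto). ring.
Qed.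

Lemma sumL_lin1' (A B C : list letter -> R) a b l :
  (forall w, In w l -> A w = a * B w + b * C w) ->
  sumL A l = a * sumL B l + b * sumL C l.
Proof.
  induction l as [|w l IH]; intros E; unfold sumL in *; simpl; [ring|].
  rewrite E by (left; reflexivity). rewrite IH by (intros; apply E; right; auto). ring.
Qed.

Fixpoint cntS (w : list letter) : nat :=
  match w with nil => O | b :: w' => ((if b then 1 else 0) + cntS w')%nat end.
Fixpoint cntH (w : list letter) : nat :=
  match w with nil => O | b :: w' => ((if b then 0 else 1) + cntH w')%nat end.
Definition wt (p q : R) (w : list letter) : R := q ^ cntS w * p ^ cntH w.

Definition cc (n1 : nat) (y : nat) : R :=
  IZR (if (Z.of_nat y <? Z.of_nat n1 - 2)%Z then (Z.of_nat y + 3)%Z else 0%Z).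

Definition fS p q m h :=
  sumL (fun w => if dyck_from h w then wt p q w else 0) (all_words m).
Definition gS p q n1 m h :=
  sumL (fun w => if dyck_from h w then wt p q w * IZR (D_from n1 (Z.of_nat h) w) else 0)
    (all_words m).

Lemma fS_0 p q h : fS p q 0 h = if Nat.eqb h 0 then 1 else 0.
Proof. unfold fS, sumL; simpl. destruct h; simpl; unfold wt; simpl; ring. Qed.

Lemma gS_0 p q n1 h : gS p q n1 0 h = 0.
Proof. unfold gS, sumL; simpl. destruct (Nat.eqb h 0); simpl; ring. Qed.

Lemma D_up n1 x w : D_from n1 x (true :: w) = D_from n1 (x + 1) w.
Proof.
  simpl. rewrite (proj2 (Z.ltb_ge (x + 1) x)) by lia. rewrite andb_false_r. lia.
Qed.

Lemma D_down n1 x w : D_from n1 x (false :: w) =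
  ((if (x - 1 <? Z.of_nat n1 - 2)%Z then (x - 1 + 3)%Z else 0%Z) + D_from n1 (x - 1) w)%Z.
Proof.
  simpl. rewrite (proj2 (Z.ltb_lt (x - 1) x)) by lia. rewrite andb_true_r. reflexivity.
Qed.

Lemma fS_S0 p q m : fS p q (Datatypes.S m) 0 = q * fS p q m 1.
Proof.
  unfold fS. rewrite sumL_aw. apply sumL_lin1. intros w _. simpl.
  destruct (dyck_from 1 w); unfold wt; simpl; ring.
Qed.

Lemma fS_SS p q m h : fS p q (Datatypes.S m) (Datatypes.S h) =
  q * fS p q m (Datatypes.S (Datatypes.S h)) + p * fS p q m h.
Proof.
  unfold fS. rewrite sumL_aw. apply sumL_lin1'. intros w _. simpl.
  destruct (dyck_from (Datatypes.S (Datatypes.S h)) w);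
  destruct (dyck_from h w); unfold wt; simpl; ring.
Qed.

Lemma gS_S0 p q n1 m : gS p q n1 (Datatypes.S m) 0 = q * gS p q n1 m 1.
Proof.
  unfold gS. rewrite sumL_aw. apply sumL_lin1. intros w _.
  rewrite D_up. simpl dyck_from.
  destruct (dyck_from 1 w); unfold wt; simpl; ring.
Qed.

Lemma gS_SS p q n1 m h : gS p q n1 (Datatypes.S m) (Datatypes.S h) =
  q * gS p q n1 m (Datatypes.S (Datatypes.S h)) +
  p * (gS p q n1 m h + cc n1 h * fS p q m h).
Proof.
  unfold gS, fS. rewrite sumL_aw. apply sumL_lin3. intros w _.
  rewrite D_up, D_down. simpl dyck_from.
  replace (Z.of_nat (Datatypes.S h) - 1)%Z with (Z.of_nat h) by lia.
  replace (Z.of_nat (Datatypes.S h) + 1)%Z with (Z.of_nat (Datatypes.S (Datatypes.S h))) by lia.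
  unfold cc. rewrite plus_IZR.
  destruct (dyck_from (Datatypes.S (Datatypes.S h)) w);
  destruct (dyck_from h w); unfold wt; simpl; ring.
Qed.
Fixpoint PS (T : nat -> R) (n : nat) : R :=
  match n with O => 0 | Datatypes.S n' => PS T n' + T n' end.

Lemma PS_shift T n : PS T (Datatypes.S n) = T O + PS (fun m => T (Datatypes.S m)) n.
Proof. induction n; simpl in *; [ring|]. rewrite IHn. ring. Qed.

Lemma PS_lin1 (A B : nat -> R) a n : (forall m, A m = a * B m) -> PS A n = a * PS B n.
Proof. intros E; induction n; simpl; [ring|]. rewrite IHn, E. ring. Qed.

Lemma PS_lin3 (A B C D0 : nat -> R) a b c n :
  (forall m, A m = a * B m + b * (C m + c * D0 m)) ->
  PS A n = a * PS B n + b * (PS C n + c * PS D0 n).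
Proof. intros E; induction n; simpl; [ring|]. rewrite IHn, E. ring. Qed.

Lemma PS_lin2 (A B C : nat -> R) a b n :
  (forall m, A m = a * B m + b * C m) -> PS A n = a * PS B n + b * PS C n.
Proof. intros E; induction n; simpl; [ring|]. rewrite IHn, E. ring. Qed.

Fixpoint sN (p q : R) (N h : nat) : R :=
  match N with
  | O => 1
  | Datatypes.S N' => q * sN p q N' (Datatypes.S h) +
      match h with O => 0 | Datatypes.S h' => p * sN p q N' h' end
  end.

Lemma mass p q : p + q = 1 -> forall N h, sN p q N h + p * PS (fun m => fS p q m h) N = 1.
Proof.
  intros Hpq N. induction N as [|N IH]; intros h; [simpl; ring|].
  rewrite PS_shift. destruct h as [|h].
  - rewrite fS_0. simpl Nat.eqb. cbv iota.
    rewrite (PS_lin1 _ (fun m => fS p q m 1) q) by (intros; apply fS_S0).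
    simpl sN.
    replace (q * sN p q N 1 + 0 + p * (1 + q * PS (fun m => fS p q m 1) N))
      with (q * (sN p q N 1 + p * PS (fun m => fS p q m 1) N) + p) by ring.
    rewrite IH. lra.
  - rewrite fS_0. simpl Nat.eqb. cbv iota.
    rewrite (PS_lin2 _ (fun m => fS p q m (Datatypes.S (Datatypes.S h))) (fun m => fS p q m h) q p)
      by (intros; apply fS_SS).
    simpl sN.
    replace (q * sN p q N (Datatypes.S (Datatypes.S h)) + p * sN p q N h +
      p * (0 + (q * PS (fun m => fS p q m (Datatypes.S (Datatypes.S h))) N +
                p * PS (fun m => fS p q m h) N)))
      with (q * (sN p q N (Datatypes.S (Datatypes.S h)) + p * PS (fun m => fS p q m (Datatypes.S (Datatypes.S h))) N)
            + p * (sN p q N h + p * PS (fun m => fS p q m h) N)) by ring.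
    rewrite !IH. lra.
Qed.
Fixpoint EN (Psi : nat -> R) (p q : R) (n1 : nat) (N h : nat) : R :=
  match N with
  | O => Psi h
  | Datatypes.S N' => q * EN Psi p q n1 N' (Datatypes.S h) +
      match h with
      | O => 0
      | Datatypes.S h' => p * (EN Psi p q n1 N' h' + cc n1 h' * sN p q N' h')
      end
  end.

Lemma EN_eq Psi p q n1 : p + q = 1 ->
  Psi O = q * Psi 1%nat + 2 * p ->
  (forall h, Psi (Datatypes.S h) = q * Psi (Datatypes.S (Datatypes.S h)) + p * (cc n1 h + Psi h)) ->
  forall N h, EN Psi p q n1 N h = Psi h - PS (fun m => p * (gS p q n1 m h + 2 * fS p q m h)) N.
Proof.
  intros Hpq E0 ES N. induction N as [|N IH]; intros h; [simpl; ring|].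
  rewrite PS_shift. destruct h as [|h].
  - rewrite fS_0, gS_0. simpl Nat.eqb. cbv iota.
    rewrite (PS_lin1 _ (fun m => p * (gS p q n1 m 1 + 2 * fS p q m 1)) q)
      by (intros; rewrite fS_S0, gS_S0; ring).
    simpl EN. rewrite IH, E0. ring.
  - rewrite fS_0, gS_0. simpl Nat.eqb. cbv iota.
    rewrite (PS_lin3 _ (fun m => p * (gS p q n1 m (Datatypes.S (Datatypes.S h)) + 2 * fS p q m (Datatypes.S (Datatypes.S h))))
        (fun m => p * (gS p q n1 m h + 2 * fS p q m h)) (fun m => fS p q m h) q p (p * cc n1 h))
      by (intros; rewrite fS_SS, gS_SS; ring).
    simpl EN. rewrite !IH, (ES h).
    pose proof (mass p q Hpq N h) as M.
    replace (sN p q N h) with (1 - p * PS (fun m => fS p q m h) N) by lra.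
    ring.
Qed.

Lemma sN_bound p q lam rho : 0 < p -> 0 < q -> 1 <= lam -> 0 <= rho ->
  q * lam * lam + p = lam * rho -> q * lam <= rho ->
  forall N h, 0 <= sN p q N h <= lam ^ (Datatypes.S h) * rho ^ N.
Proof.
  intros hp hq hl hr Hlr Hql N. induction N as [|N IH]; intros h.
  - simpl. split; [lra|]. rewrite Rmult_1_r. 
    pose proof (pow_R1_Rle lam h hl). nra.
  - assert (X0 : 0 <= lam ^ h) by (apply pow_le; lra).
    assert (Y0 : 0 <= rho ^ N) by (apply pow_le; lra).
    destruct h as [|h].
    + simpl sN. destruct (IH 1%nat) as [a b]. simpl in b |- *.
      split; [nra|].
      set (Y := rho ^ N) in *.
      assert (q * (lam * (lam * 1) * Y) <= lam * 1 * (rho * Y)).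
      { replace (q * (lam * (lam * 1) * Y)) with ((q * lam) * (lam * Y)) by ring.
        replace (lam * 1 * (rho * Y)) with (rho * (lam * Y)) by ring.
        apply Rmult_le_compat_r; nra. }
      nra.
    + simpl sN. destruct (IH (Datatypes.S (Datatypes.S h))) as [a1 b1].
      destruct (IH h) as [a2 b2].
      split; [nra|].
      simpl in b1, b2 |- *.
      set (X := lam ^ h) in *. set (Y := rho ^ N) in *.
      apply Rle_trans with (q * (lam * (lam * (lam * X)) * Y) + p * (lam * X * Y)).
      { apply Rplus_le_compat; apply Rmult_le_compat_l; lra. }
      right.
      replace (q * (lam * (lam * (lam * X)) * Y) + p * (lam * X * Y))
        with ((q * lam * lam + p) * (lam * X * Y)) by ring.
      rewrite Hlr. ring.
Qed.
Lemma EN_bound Psi p q n1 lam rho mu a b : 0 < p -> 0 < q -> 1 <= lam -> 0 <= rho ->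
  rho < mu -> 0 <= b ->
  q * lam * lam + p = lam * rho -> q * lam <= rho ->
  (forall h, Rabs (Psi h) <= a) -> (forall h, 0 <= cc n1 h <= b) ->
  forall N h, Rabs (EN Psi p q n1 N h) <=
    (a + p * b / (mu - rho)) * (lam ^ (Datatypes.S h) * mu ^ N).
Proof.
  intros hp hq hl hr hrm hb Hlr Hql Ha Hc.
  assert (a0 : 0 <= a) by (pose proof (Ha O); pose proof (Rabs_pos (Psi O)); lra).
  assert (k0 : 0 <= p * b / (mu - rho)).
  { unfold Rdiv. apply Rmult_le_pos; [nra|]. left; apply Rinv_0_lt_compat; lra. }
  assert (kk : p * b <= (a + p * b / (mu - rho)) * (mu - rho)).
  { replace ((a + p * b / (mu - rho)) * (mu - rho)) with (a * (mu - rho) + p * b) by (field; lra).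
    nra. }
  set (C := a + p * b / (mu - rho)) in *.
  assert (C0 : 0 <= C) by (unfold C; lra).
  intros N. induction N as [|N IH]; intros h.
  - simpl. rewrite Rmult_1_r. pose proof (pow_R1_Rle lam h hl). specialize (Ha h).
    assert (1 <= lam * lam ^ h) by nra.
    assert (a <= C) by (unfold C; lra). nra.
  - assert (X0 : 0 <= lam ^ h) by (apply pow_le; lra).
    assert (Y0 : 0 <= mu ^ N) by (apply pow_le; lra).
    assert (Z0 : 0 <= rho ^ N) by (apply pow_le; lra).
    assert (ZY : rho ^ N <= mu ^ N) by (apply pow_incr; lra).
    destruct h as [|h].
    + simpl EN. specialize (IH 1%nat). simpl in IH |- *.
      rewrite Rplus_0_r, Rabs_mult, (Rabs_pos_eq q) by lra.
      set (Y := mu ^ N) in *.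
      apply Rle_trans with (q * (C * (lam * (lam * 1) * Y))).
      { apply Rmult_le_compat_l; lra. }
      replace (q * (C * (lam * (lam * 1) * Y))) with ((q * lam) * (C * lam * Y)) by ring.
      replace (C * (lam * 1 * (mu * Y))) with (mu * (C * lam * Y)) by ring.
      apply Rmult_le_compat_r; [|lra]. apply Rmult_le_pos; [nra|lra].
    + simpl EN. pose proof (IH (Datatypes.S (Datatypes.S h))) as I1. pose proof (IH h) as I2.
      pose proof (sN_bound p q lam rho hp hq hl hr Hlr Hql N h) as [s0 s1].
      destruct (Hc h) as [c0 c1].
      simpl in I1, I2, s1 |- *.
      set (X := lam ^ h) in *. set (Y := mu ^ N) in *. set (Z := rho ^ N) in *.
      set (E1 := EN Psi p q n1 N (Datatypes.S (Datatypes.S h))) in *.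
      set (E2 := EN Psi p q n1 N h) in *.
      set (s := sN p q N h) in *. set (c := cc n1 h) in *.
      apply Rle_trans with (q * Rabs E1 + p * (Rabs E2 + c * s)).
      { eapply Rle_trans; [apply Rabs_triang|].
        rewrite !Rabs_mult, (Rabs_pos_eq q), (Rabs_pos_eq p) by lra.
        apply Rplus_le_compat_l. apply Rmult_le_compat_l; [lra|].
        eapply Rle_trans; [apply Rabs_triang|].
        rewrite Rabs_mult, (Rabs_pos_eq c), (Rabs_pos_eq s) by lra. lra. }
      assert (cs : c * s <= b * (lam * X * Z)).
      { apply Rmult_le_compat; lra. }
      apply Rle_trans with (q * (C * (lam * (lam * (lam * X)) * Y)) + p * (C * (lam * X * Y) + b * (lam * X * Z))).
      { apply Rplus_le_compat; apply Rmult_le_compat_l; lra. }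
      assert (XX : 0 <= X) by (unfold X; apply pow_le; lra).
      assert (LX : 0 <= lam * X) by (apply Rmult_le_pos; lra).
      assert (pbZ : p * b * (lam * X * Z) <= C * (mu - rho) * (lam * X * Y)).
      { apply Rmult_le_compat; try nra. }
      replace (q * (C * (lam * (lam * (lam * X)) * Y)) + p * (C * (lam * X * Y) + b * (lam * X * Z)))
        with ((q * lam * lam + p) * (C * (lam * X * Y)) + p * b * (lam * X * Z)) by ring.
      rewrite Hlr.
      assert (C * (mu - rho) * (lam * X * Y) <= C * (mu - rho) * (lam * X * Y) * lam).
      { assert (0 <= C * (mu - rho) * (lam * X * Y)) by (apply Rmult_le_pos; [nra|nra]). nra. }
      replace (C * (lam * (lam * X) * (mu * Y))) with (lam * rho * (C * (lam * X * Y)) + C * (mu - rho) * (lam * X * Y) * lam) by ring.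
      lra.
Qed.
Definition Kn (n1 : nat) : nat := (n1 - 2)%nat.
Definition rr (p q : R) : R := q / p.
Definition al (p q : R) : R := p / (2 * (p - q)).
Definition be (p q : R) : R := (2 * p + al p q) / (p - q).
Definition Bc p q n1 : R := - (al p q * (2 * INR (Kn n1) + 1) + be p q) / (1 - rr p q).
Definition Ac p q n1 : R := be p q - al p q - Bc p q n1 * rr p q ^ (Kn n1 + 2).
Definition phi p q n1 (e : nat) (x : R) : R :=
  Ac p q n1 + Bc p q n1 * rr p q ^ e + al p q * x * x + be p q * x.
Definition Phi p q n1 (j : nat) : R := phi p q n1 (Kn n1 + 1 - j) (INR j).
Definition Psi p q n1 (h : nat) : R := Phi p q n1 (Nat.min h (Kn n1)).

Lemma phi_int p q n1 e x : 0 < q -> q < p -> p + q = 1 ->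
  q * phi p q n1 e (x + 1) - phi p q n1 (Datatypes.S e) x
  + p * phi p q n1 (Datatypes.S (Datatypes.S e)) (x - 1) = - p * (x + 2).
Proof.
  intros hq hqp hpq. unfold phi. simpl pow.
  generalize (rr p q ^ e); intro X. generalize (Ac p q n1) (Bc p q n1); intros A B.
  unfold be, al, rr. replace q with (1 - p) by lra. field. lra.
Qed.

Lemma phi_F1 p q n1 : phi p q n1 (Kn n1 + 2) (-1) = 0.
Proof. unfold phi, Ac. ring. Qed.

Lemma phi_F2 p q n1 : 0 < q -> q < p -> p + q = 1 ->
  phi p q n1 0 (INR (Kn n1) + 1) = phi p q n1 1 (INR (Kn n1)).
Proof.
  intros hq hqp hpq. unfold phi, Bc. simpl pow.
  generalize (Ac p q n1); intro A. generalize (INR (Kn n1)); intro k.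
  unfold be, al, rr. replace q with (1 - p) by lra. field.
  split; lra.
Qed.
Lemma Psi_le p q n1 h : 0 < q -> q < p -> p + q = 1 -> (h <= Kn n1 + 1)%nat ->
  Psi p q n1 h = phi p q n1 (Kn n1 + 1 - h) (INR h).
Proof.
  intros hq hqp hpq hh. unfold Psi, Phi.
  destruct (Nat.le_gt_cases h (Kn n1)) as [l|g].
  - rewrite Nat.min_l by lia. reflexivity.
  - rewrite Nat.min_r by lia. assert (h = Kn n1 + 1)%nat by lia. subst h.
    replace (Kn n1 + 1 - Kn n1)%nat with 1%nat by lia.
    replace (Kn n1 + 1 - (Kn n1 + 1))%nat with 0%nat by lia.
    rewrite plus_INR. simpl (INR 1). symmetry. apply phi_F2; auto.
Qed.

Lemma Psi_eq0 p q n1 : 0 < q -> q < p -> p + q = 1 ->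
  Psi p q n1 O = q * Psi p q n1 1%nat + 2 * p.
Proof.
  intros hq hqp hpq.
  rewrite !Psi_le by (auto; lia).
  replace (Kn n1 + 1 - 1)%nat with (Kn n1) by lia.
  replace (Kn n1 + 1 - 0)%nat with (Datatypes.S (Kn n1)) by lia.
  pose proof (phi_int p q n1 (Kn n1) 0 hq hqp hpq) as E.
  pose proof (phi_F1 p q n1) as F.
  replace (Kn n1 + 2)%nat with (Datatypes.S (Datatypes.S (Kn n1))) in F by lia.
  replace (0 - 1) with (-1) in E by ring.
  rewrite F, Rplus_0_l in E. simpl (INR 0). simpl (INR 1). lra.
Qed.

Lemma Psi_eqS p q n1 h : 0 < q -> q < p -> p + q = 1 -> (2 <= n1)%nat ->
  Psi p q n1 (Datatypes.S h) =
  q * Psi p q n1 (Datatypes.S (Datatypes.S h)) + p * (cc n1 h + Psi p q n1 h).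
Proof.
  intros hq hqp hpq hn.
  destruct (Nat.lt_ge_cases h (Kn n1)) as [l|g].
  - rewrite !Psi_le by (auto; lia).
    set (e := (Kn n1 - Datatypes.S h)%nat).
    replace (Kn n1 + 1 - Datatypes.S (Datatypes.S h))%nat with e by (unfold e; lia).
    replace (Kn n1 + 1 - Datatypes.S h)%nat with (Datatypes.S e) by (unfold e; lia).
    replace (Kn n1 + 1 - h)%nat with (Datatypes.S (Datatypes.S e)) by (unfold e; lia).
    pose proof (phi_int p q n1 e (INR h + 1) hq hqp hpq) as E.
    replace (INR h + 1 - 1) with (INR h) in E by ring.
    rewrite !S_INR.
    unfold cc. rewrite (proj2 (Z.ltb_lt _ _)) by (unfold Kn in l; lia).
    rewrite plus_IZR, <- INR_IZR_INZ. lra.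
  - unfold Psi. rewrite !Nat.min_r by lia.
    unfold cc. rewrite (proj2 (Z.ltb_ge _ _)) by (unfold Kn in g; lia).
    replace q with (1 - p) by lra. simpl (IZR 0). ring.
Qed.

Lemma Psi_val p q n1 : 0 < q -> q < p -> p + q = 1 -> (2 <= n1)%nat ->
  Psi p q n1 O = p / (p - q) ^ 2 *
     (2 * p - q - (p + INR n1 * (p - q)) * (q / p) ^ (n1 - 1)).
Proof.
  intros hq hqp hpq hn.
  rewrite Psi_le by (auto; lia).
  unfold phi, Ac, Bc.
  replace (n1 - 1)%nat with (Kn n1 + 1)%nat by (unfold Kn; lia).
  replace (Kn n1 + 2)%nat with (Datatypes.S (Kn n1 + 1)) by lia.
  replace (Kn n1 + 1 - 0)%nat with (Kn n1 + 1)%nat by lia.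
  replace (INR n1) with (INR (Kn n1) + 2).
  2:{ unfold Kn. rewrite minus_INR by lia. simpl. lra. }
  simpl pow. unfold rr. generalize ((q / p) ^ (Kn n1 + 1)); intro X.
  generalize (INR (Kn n1)); intro k. simpl (INR 0).
  unfold be, al. replace q with (1 - p) by lra. field.
  split; lra.
Qed.
Lemma in_aw_len m w : In w (all_words m) -> length w = m.
Proof.
  revert w. induction m as [|m IH]; intros w Hin.
  - simpl in Hin. destruct Hin as [<-|[]]. reflexivity.
  - change (all_words (Datatypes.S m)) with
      (flat_map (fun w => [true :: w; false :: w]) (all_words m)) in Hin.
    apply in_flat_map in Hin. destruct Hin as [x [Hx Hw]].
    simpl in Hw. destruct Hw as [<-|[<-|[]]]; simpl; rewrite IH; auto.
Qed.

Lemma dyck_cnt w : forall h, dyck_from h w = true -> (cntS w + h = cntH w)%nat.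
Proof.
  induction w as [|b w IH]; intros h Hd; simpl in *.
  - apply Nat.eqb_eq in Hd. lia.
  - destruct b.
    + apply IH in Hd. lia.
    + destruct h as [|h]; [discriminate|]. apply IH in Hd. lia.
Qed.

Lemma len_cnt w : length w = (cntS w + cntH w)%nat.
Proof. induction w as [|b w IH]; simpl; [reflexivity|]. destruct b; simpl; lia. Qed.

Lemma D_app n1 w1 : forall x w2,
  D_from n1 x (w1 ++ w2) = (D_from n1 x w1 + D_from n1 (fold_left step w1 x) w2)%Z.
Proof.
  induction w1 as [|b w1 IH]; intros x w2; simpl; [reflexivity|].
  rewrite IH. lia.
Qed.

Lemma dyck_end w : forall h, dyck_from h w = true -> fold_left step w (Z.of_nat h) = 0%Z.
Proof.
  induction w as [|b w IH]; intros h Hd; simpl in *.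
  - apply Nat.eqb_eq in Hd. subst. reflexivity.
  - destruct b; simpl.
    + replace (Z.of_nat h + 1)%Z with (Z.of_nat (Datatypes.S h)) by lia. auto.
    + destruct h as [|h]; [discriminate|].
      replace (Z.of_nat (Datatypes.S h) - 1)%Z with (Z.of_nat h) by lia. auto.
Qed.

Definition Tm p q n1 m := p * (gS p q n1 m O + 2 * fS p q m O).

Lemma Teven p q n1 m k : (2 <= n1)%nat -> m = (2 * k)%nat -> Tm p q n1 m = E_term n1 p q k.
Proof.
  intros hn ->. unfold Tm, E_term, gS, fS. symmetry.
  change (fold_right Rplus 0 (map ?F ?l)) with (sumL F l).
  apply sumL_lin2. intros w Hw. apply in_aw_len in Hw.
  unfold is_dyck. destruct (dyck_from 0 w) eqn:Ed.
  - pose proof (dyck_cnt w 0 Ed) as c1. pose proof (len_cnt w) as c2.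
    assert (cS : cntS w = k) by lia. assert (cH : cntH w = k) by lia.
    pose proof (dyck_end w 0 Ed) as EE. simpl Z.of_nat in EE.
    unfold D. rewrite D_app, EE.
    assert (D_from n1 0 [H] = 2%Z) as E2.
    { unfold Defs.H. simpl. rewrite (proj2 (Z.ltb_lt _ _)) by lia. reflexivity. }
    rewrite E2, plus_IZR. unfold cond_prob, wt. simpl Z.of_nat.
    rewrite cS, cH, Rpow_mult_distr. ring.
  - ring.
Qed.

Lemma Todd p q n1 m k : m = (2 * k + 1)%nat -> Tm p q n1 m = 0.
Proof.
  intros ->. unfold Tm, gS, fS.
  rewrite (sumL_lin1 _ (fun _ => 0) 0), (sumL_lin1 (fun w => if dyck_from 0 w then wt p q w else 0) (fun _ => 0) 0).
  - ring.
  - intros w Hw. apply in_aw_len in Hw.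
    destruct (dyck_from 0 w) eqn:Ed; [|ring].
    pose proof (dyck_cnt w 0 Ed). pose proof (len_cnt w). lia.
  - intros w Hw. apply in_aw_len in Hw.
    destruct (dyck_from 0 w) eqn:Ed; [|ring].
    pose proof (dyck_cnt w 0 Ed). pose proof (len_cnt w). lia.
Qed.

Lemma PS_S T n : PS T (Datatypes.S n) = PS T n + T n.
Proof. reflexivity. Qed.

Lemma partial p q n1 : (2 <= n1)%nat -> forall n,
  sum_f_R0 (E_term n1 p q) n = PS (Tm p q n1) (2 * n + 2).
Proof.
  intros hn n. induction n as [|n IH].
  - simpl. rewrite (Teven p q n1 0 0) by (auto; lia).
    rewrite (Todd p q n1 1 0) by lia. ring.
  - simpl sum_f_R0. rewrite IH.
    replace (2 * Datatypes.S n + 2)%nat with (Datatypes.S (Datatypes.S (2 * n + 2))) by lia.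
    rewrite !PS_S. rewrite (Teven p q n1 (2 * n + 2) (Datatypes.S n)) by (auto; lia).
    rewrite (Todd p q n1 (Datatypes.S (2 * n + 2)) (Datatypes.S n)) by lia. ring.
Qed.
Lemma sum_ge f K j : (forall i, 0 <= f i) -> (j <= K)%nat -> f j <= sum_f_R0 f K.
Proof.
  intros Hf. induction K as [|K IH]; intros hj.
  - assert (j = O) by lia. subst. simpl. lra.
  - simpl. destruct (Nat.eq_dec j (Datatypes.S K)) as [->|ne].
    + pose proof (cond_pos_sum f K Hf). lra.
    + pose proof (IH ltac:(lia)). pose proof (Hf (Datatypes.S K)). lra.
Qed.

Theorem proposition10 (p q : R) (n1 : nat) :
  0 < q -> q < p -> p + q = 1 -> (2 <= n1)%nat ->
  infinite_sum (E_term n1 p q)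
    (p / (p - q) ^ 2 *
     (2 * p - q - (p + INR n1 * (p - q)) * (q / p) ^ (n1 - 1))).
Proof.
  intros hq hqp hpq hn.
  assert (hp : 0 < p) by lra.
  set (lam := / (2 * q)).
  assert (Hq1 : q * lam = 1 / 2) by (unfold lam; field; lra).
  assert (hl : 1 <= lam) by nra.
  set (rho := 1 / 2 + 2 * p * q).
  assert (hr0 : 0 <= rho) by (unfold rho; nra).
  assert (hr1 : rho < 1) by (unfold rho; nra).
  set (mu := (1 + rho) / 2).
  assert (hrm : rho < mu) by (unfold mu; lra).
  assert (hm1 : mu < 1) by (unfold mu; lra).
  assert (Hlr : q * lam * lam + p = lam * rho).
  { unfold rho. replace (q * lam * lam) with ((q * lam) * lam) by ring.
    replace (lam * (1 / 2 + 2 * p * q)) with (lam * (1/2) + 2 * p * (q * lam)) by ring.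
    rewrite Hq1. field. }
  assert (Hql : q * lam <= rho) by (rewrite Hq1; unfold rho; nra).
  set (a := sum_f_R0 (fun j => Rabs (Phi p q n1 j)) (Kn n1)).
  assert (Ha : forall h, Rabs (Psi p q n1 h) <= a).
  { intros h. unfold Psi, a.
    apply (sum_ge (fun j => Rabs (Phi p q n1 j))); [intros; apply Rabs_pos | lia]. }
  set (b := INR n1 + 1).
  assert (hb : 0 <= b) by (unfold b; pose proof (pos_INR n1); lra).
  assert (Hc : forall h, 0 <= cc n1 h <= b).
  { intros h. unfold cc, b. rewrite INR_IZR_INZ, <- plus_IZR.
    destruct (Z.ltb_spec (Z.of_nat h) (Z.of_nat n1 - 2)); split; apply IZR_le; lia. }
  pose proof (EN_bound (Psi p q n1) p q n1 lam rho mu a b hp hq hl hr0 hrm hb Hlr Hql Ha Hc)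
    as Bd.
  pose proof (EN_eq (Psi p q n1) p q n1 hpq (Psi_eq0 p q n1 hq hqp hpq)
     (fun h => Psi_eqS p q n1 h hq hqp hpq hn)) as Eq.
  set (C := a + p * b / (mu - rho)) in Bd.
  assert (a0 : 0 <= a) by (pose proof (Ha O); pose proof (Rabs_pos (Psi p q n1 O)); lra).
  assert (C0 : 0 <= C).
  { unfold C. assert (0 <= p * b / (mu - rho)); [|lra].
    unfold Rdiv. apply Rmult_le_pos; [nra|]. left; apply Rinv_0_lt_compat; lra. }
  intros eps He.
  assert (hmu : Rabs mu < 1) by (rewrite Rabs_pos_eq; unfold mu; lra).
  assert (He' : 0 < eps / (C * lam + 1)).
  { apply Rdiv_lt_0_compat; [lra|nra]. }
  destruct (pow_lt_1_zero mu hmu _ He') as [N0 HN].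
  exists N0. intros n Hn.
  unfold Rdist. rewrite partial by exact hn.
  rewrite <- Psi_val by assumption.
  specialize (Eq (2 * n + 2)%nat O). change (fun m => p * (gS p q n1 m 0 + 2 * fS p q m 0)) with (Tm p q n1) in Eq.
  replace (PS (Tm p q n1) (2 * n + 2) - Psi p q n1 0) with (- EN (Psi p q n1) p q n1 (2 * n + 2) 0) by lra.
  rewrite Rabs_Ropp.
  specialize (Bd (2 * n + 2)%nat O). specialize (HN (2 * n + 2)%nat ltac:(lia)).
  assert (m0 : 0 <= mu ^ (2 * n + 2)) by (apply pow_le; unfold mu; lra).
  rewrite Rabs_pos_eq in HN by exact m0.
  simpl (lam ^ 1) in Bd.
  apply (Rmult_lt_compat_l (C * lam + 1)) in HN; [|nra].
  replace ((C * lam + 1) * (eps / (C * lam + 1))) with eps in HN by (field; nra).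
  nra.
Qed.
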